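(* Let $G$ be a finite simple connected regular graph with at least one edge, which is edge-reconstructable (so that $ern(G)$ is defined), is $2$-swappable, and all of whose edges are removal similar (i.e. $G-e\cong G-f$ for all $e,f\in E(G)$). Then $ern(G)\geq 3$.
   Context: All graphs are finite and simple. For a graph $G$ and $e\in E(G)$, the unlabeled graph $G-e$ is an edge-card of $G$; the edge-deck $\mathcal{ED}(G)$ is the multiset of all edge-cards $G-e$, $e\in E(G)$ (taken up to isomorphism). For a sub-multiset $S\subseteq\mathcal{ED}(G)$, a blocker of $S$ is a graph $H\not\cong G$ such that $S\subseteq\mathcal{ED}(H)$ as multisets. $G$ is reconstructable from $S$ if $S$ has no blocker; $G$ is edge-reconstructable if it is reconstructable from $\mathcal{ED}(G)$. For such $G$, the edge reconstruction number $ern(G)$ is the minimum size of a sub-multiset $S\subseteq\mathcal{ED}(G)$ from which $G$ is reconstructable. For $A\subseteq E(G)$ and $B\subseteq E(\bar G)$, $G-A+B$ denotes the graph on $V(G)$ with edge set $(E(G)\setminus A)\cup B$. $G$ is $2$-swappable if for every $e\in E(G)$ there exist $A\subseteq E(G)$ and $B\subseteq E(\bar G)$ with $e\in A$, $|A|\leq 2$, and $G\cong G-A+B$. *)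

(* Defs.v *)
From mathcomp Require Import all_boot.
Set Implicit Arguments. Unset Strict Implicit. Unset Printing Implicit Defensive.

(* A graph on vertex set 'I_n is given by its edge set: a set of 2-subsets. *)
Definition graph (n : nat) := {set {set 'I_n}}.

Definition simple_graph n (E : graph n) : bool := [forall e in E, #|e| == 2].

(* Graph isomorphism (possibly between different vertex counts; then false). *)
Definition isog n m (E1 : graph n) (E2 : graph m) : bool :=
  [exists f : {ffun 'I_n -> 'I_m},
     [&& n == m, injectiveb f &
         [forall e : {set 'I_n}, (e \in E1) == (f @: e \in E2)]]].

Definition nonedges n (E : graph n) : graph n :=
  [set e : {set 'I_n} | (#|e| == 2) && (e \notin E)].

(* With A = E(G) this is the multiplicity of X in the edge-deck ED(G).
   A sub-multiset S of ED(G) is the multiset of cards {G - e : e in A} for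
   some A \subset E(G), and |S| = #|A|. *)
Definition card_mult n (E : graph n) (A : {set {set 'I_n}}) m (X : graph m) : nat :=
  #|[set e in A | isog (E :\ e) X]|.

(* S (given by A) is a sub-multiset of ED(H). *)
Definition deck_sub n (E : graph n) (A : {set {set 'I_n}}) m (H : graph m) : Prop :=
  forall m' (X : graph m'), card_mult E A X <= card_mult H H X.

Definition blocker n (E : graph n) (A : {set {set 'I_n}}) m (H : graph m) : Prop :=
  simple_graph H /\ ~~ isog H E /\ deck_sub E A H.

Definition reconstructable_from n (E : graph n) (A : {set {set 'I_n}}) : Prop :=
  forall m (H : graph m), ~ blocker E A H.

Definition edge_reconstructable n (E : graph n) : Prop := reconstructable_from E E.

Definition is_ern n (E : graph n) (r : nat) : Prop :=
  (exists A : {set {set 'I_n}}, A \subset E /\ #|A| = r /\ reconstructable_from E A) /\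
  (forall A : {set {set 'I_n}}, A \subset E -> reconstructable_from E A -> r <= #|A|).

Definition adj n (E : graph n) : rel 'I_n := fun x y => [set x; y] \in E.

Definition connected n (E : graph n) : Prop := forall x y : 'I_n, connect (adj E) x y.

Definition regular n (E : graph n) : Prop :=
  exists d, forall v : 'I_n, #|[set u | adj E v u]| = d.

Definition two_swappable n (E : graph n) : Prop :=
  forall e, e \in E -> exists A B : {set {set 'I_n}},
    [/\ A \subset E, B \subset nonedges E, e \in A, #|A| <= 2 &
        isog E ((E :\: A) :|: B)].

Definition removal_similar n (E : graph n) : Prop :=
  forall e f, e \in E -> f \in E -> isog (E :\ e) (E :\ f).

(* Main.v *)
Require Import Defs.
From mathcomp Require Import all_boot zify.
Set Implicit Arguments. Unset Strict Implicit. Unset Printing Implicit Defensive.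

Lemma isogP n (E1 E2 : graph n) :
  isog E1 E2 -> exists f : 'I_n -> 'I_n, injective f /\ forall s, (s \in E1) = (f @: s \in E2).
Proof.
case/existsP=> f /and3P [_ /injectiveP fi /forallP H].
by exists f; split => // s; apply/eqP; exact: H.
Qed.

Lemma isogI n (E1 E2 : graph n) (f : 'I_n -> 'I_n) :
  injective f -> (forall s, (s \in E1) = (f @: s \in E2)) -> isog E1 E2.
Proof.
move=> fi H; apply/existsP; exists [ffun x => f x].
rewrite eqxx /=; apply/andP; split.
  by apply/injectiveP => x y; rewrite !ffunE => /fi.
apply/forallP => s; rewrite (H s).
have -> : [set [ffun x => f x] x | x in s] = [set f x | x in s].
  by apply: eq_imset => x; rewrite ffunE.
by [].
Qed.

Lemma isog_trans n m k (E1 : graph n) (E2 : graph m) (E3 : graph k) :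
  isog E1 E2 -> isog E2 E3 -> isog E1 E3.
Proof.
case/existsP=> f /and3P [/eqP enm /injectiveP fi /forallP Hf].
case/existsP=> g /and3P [/eqP emk /injectiveP gi /forallP Hg].
subst m k.
apply/existsP; exists [ffun x => g (f x)].
rewrite eqxx /=; apply/andP; split.
  by apply/injectiveP => x y; rewrite !ffunE => /gi /fi.
apply/forallP => s; rewrite (eqP (Hf s)) (eqP (Hg _)).
have -> : [set [ffun x => g (f x)] x | x in s] = [set g x | x in [set f x | x in s]].
  by rewrite -imset_comp; apply: eq_imset => x; rewrite ffunE.
by [].
Qed.

Lemma isog_sym n (E1 E2 : graph n) : isog E1 E2 -> isog E2 E1.
Proof.
case/isogP=> f [fi H]; apply: (isogI (f := invF fi)); first exact: can_inj (f_invF fi).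
move=> s; rewrite H -imset_comp.
have -> : [set (f \o invF fi) x | x in s] = s.
  by rewrite -[RHS]imset_id; apply: eq_imset => x /=; rewrite f_invF.
by [].
Qed.

Lemma isog_del n (E1 E2 : graph n) x :
  isog E1 E2 -> x \in E2 -> exists2 y, y \in E1 & isog (E2 :\ x) (E1 :\ y).
Proof.
case/isogP=> f [fi H] xE.
have fy : f @: (invF fi @: x) = x.
  by rewrite -imset_comp -[RHS]imset_id; apply: eq_imset => z /=; rewrite f_invF.
exists (invF fi @: x); first by rewrite H fy.
apply: isog_sym; apply: (isogI fi) => s; rewrite !inE H.
have := inj_eq (imset_inj fi) s (invF fi @: x); rewrite /= fy => <-.
by [].
Qed.

Definition deg n (E : graph n) v := #|[set u | adj E v u]|.

Lemma isog_deg n (E1 E2 : graph n) (f : 'I_n -> 'I_n) :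
  injective f -> (forall s, (s \in E1) = (f @: s \in E2)) -> forall v, deg E1 v = deg E2 (f v).
Proof.
move=> fi H v; rewrite /deg -[in RHS](card_preimset _ fi); apply: eq_card => u.
by rewrite !inE /adj H imsetU1 imset_set1.
Qed.

Lemma isog_regular n (E1 E2 : graph n) : isog E1 E2 -> regular E2 -> regular E1.
Proof.
case/isogP=> f [fi H] [d Hd]; exists d => v.
by have := isog_deg fi H v; rewrite /deg => ->; apply: Hd.
Qed.

Lemma other_end (T : finType) (e : {set T}) x : #|e| = 2 -> x \in e -> exists2 z, z != x & e = [set x; z].
Proof.
move=> ce xe.
have : #|e :\ x| == 1 by move: ce; rewrite (cardsD1 x e) xe add1n => -[->].
case/cards1P=> z ez; exists z; last by rewrite -(setD1K xe) ez.
by apply/eqP=> zx; have := set11 z; rewrite -ez zx setD11.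
Qed.

Lemma not_regular n (E : graph n) e b :
  regular E -> e \in E -> #|e| = 2 -> b \notin E -> #|b| = 2 ->
  ~ regular (E :\ e :|: [set b]).
Proof.
move=> [d Hd] eE ce bE cb [d' Hd'].
have neb : e != b by apply: contraNneq bE => <-.
have [x xe xb] : exists2 x, x \in e & x \notin b.
  apply/subsetPn; apply: contra neb => sub.
  by rewrite eqEcard sub ce cb.
have [y yb ye] : exists2 y, y \in b & y \notin e.
  apply/subsetPn; apply: contra neb => sub.
  by rewrite eq_sym eqEcard sub ce cb.
have [z zx ez] := other_end ce xe.
have [w wy bw] := other_end cb yb.
have h1 : d' < d.
  rewrite -(Hd x) -(Hd' x); apply: proper_card; apply/properP; split.
    apply/subsetP => u; rewrite !inE /adj !inE => /orP [/andP [_ ->] //|/eqP exb].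
    by move: xb; rewrite -exb !inE eqxx.
  exists z; first by rewrite !inE /adj -ez.
  by rewrite !inE /adj !inE -ez eqxx /= (negbTE neb).
have h2 : d < d'.
  rewrite -(Hd y) -(Hd' y); apply: proper_card; apply/properP; split.
    apply/subsetP => u; rewrite !inE /adj !inE => ->; rewrite andbT orbC; apply/orP; right.
    by apply: contraNneq ye => <-; rewrite !inE eqxx.
  exists w; first by rewrite !inE /adj !inE -bw eqxx orbT.
  by rewrite !inE /adj -bw.
by move: (ltn_trans h1 h2); rewrite ltnn.
Qed.

Lemma isog_card_le n (E1 E2 : graph n) : isog E1 E2 -> #|E1| <= #|E2|.
Proof.
case/isogP=> f [fi H].
rewrite -(card_imset E1 (imset_inj fi)); apply: subset_leq_card.
by apply/subsetP => t /imsetP [s sE ->]; rewrite -H.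
Qed.

Lemma isog_card n (E1 E2 : graph n) : isog E1 E2 -> #|E1| = #|E2|.
Proof.
by move=> h; apply/eqP; rewrite eqn_leq !isog_card_le //; apply: isog_sym.
Qed.

Lemma blocker_exists (n : nat) (E : graph n)
  (Hsimple : simple_graph E) (Hreg : regular E)
  (Hedge : E != set0)
  (Hswap : two_swappable E) (Hrs : removal_similar E)
  (A : {set {set 'I_n}}) : A \subset E -> #|A| <= 2 -> exists m (H : graph m), blocker E A H.
Proof.
move=> AE cA.
have simp : forall s, s \in E -> #|s| = 2 by move=> s sE; have := forallP Hsimple s; rewrite sE => /eqP.
case/set0Pn: Hedge => e eE.
have [A' [B [A'E BN eA' cA' Hiso]]] := Hswap e eE.
have BE : forall b, b \in B -> #|b| = 2 /\ b \notin E.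
  by move=> b /(subsetP BN); rewrite inE => /andP [/eqP -> ->].
have ceq := isog_card Hiso.
rewrite cardsU cardsD (setIidPr A'E) in ceq.
have I0 : (E :\: A') :&: B = set0.
  apply/setP => z; rewrite !inE; apply/negbTE; apply/andP => [[/andP [_ sE] sB]].
  by have [_] := BE z sB; rewrite sE.
rewrite I0 cards0 subn0 in ceq.
have cA'E : #|A'| <= #|E| by apply: subset_leq_card.
have cA'0 : 0 < #|A'| by apply/card_gt0P; exists e.
have cBA : #|B| = #|A'| by lia.
have [A1|A2] : #|A'| = 1 \/ #|A'| = 2 by lia.
  exfalso.
  have := A1; move/eqP/cards1P => [x Ax]; move: eA'; rewrite Ax inE => /eqP ex; subst x.
  have := cBA; rewrite A1 => /eqP/cards1P [b Bb].
  have [cb bE] : #|b| = 2 /\ b \notin E by apply: BE; rewrite Bb set11.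
  apply: (not_regular Hreg eE (simp e eE) bE cb).
  by rewrite -Ax -Bb; apply: isog_regular Hreg; apply: isog_sym.
have [e' e'e A'2] := other_end A2 eA'.
have := cBA; rewrite A2 => /eqP/cards2P [b1 [b2 [b12 Bb]]].
have [cb1 b1E] : #|b1| = 2 /\ b1 \notin E by apply: BE; rewrite Bb !inE eqxx.
have [cb2 b2E] : #|b2| = 2 /\ b2 \notin E by apply: BE; rewrite Bb !inE eqxx orbT.
have e'E : e' \in E by apply: (subsetP A'E); rewrite A'2 !inE eqxx orbT.
set H := E :\ e :|: [set b1].
exists n, H; split; [|split].
- apply/forallP => t; apply/implyP; rewrite !inE => /orP [/andP [_ sE]|/eqP ->].
    by rewrite simp.
  by rewrite cb1.
- apply/negP => iso; apply: (not_regular Hreg eE (simp e eE) b1E cb1).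
  exact: isog_regular iso Hreg.
- move=> m' X; rewrite /card_mult.
  have HS1 : H :\ b1 = E :\ e.
    apply/setP => z; rewrite !inE; have [->|nb] := eqVneq z b1; first by rewrite (negbTE b1E) andbF.
    by rewrite /= orbF.
  have HS2 : H :\ e' = ((E :\: A') :|: B) :\ b2.
    apply/setP => z; rewrite A'2 Bb !inE.
    have [->|sb2] := eqVneq z b2.
      by rewrite (negbTE b2E) !andbF /= [b2 == b1]eq_sym (negbTE b12) andbF.
    have [->|sb1] := eqVneq z b1.
      by rewrite /= !orbT andbT; apply/eqP => eb; move: e'E; rewrite -eb (negbTE b1E).
    by rewrite /= !orbF; case: (z == e'); case: (z == e); case: (z \in E).
  have b2G : b2 \in (E :\: A') :|: B by apply/setUP; right; rewrite Bb !inE eqxx orbT.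
  have [y yE iy] := isog_del Hiso b2G.
  case: (boolP (isog (E :\ e) X)) => hX.
    have h1 : #|[set a in A | isog (E :\ a) X]| <= 2.
      by apply: leq_trans cA; apply: subset_leq_card; apply/subsetP => a; rewrite inE => /andP [].
    apply: leq_trans h1 _.
    have b1e' : b1 != e' by apply: contraNneq b1E => ->.
    apply: (@leq_trans #|[set b1; e']|); first by rewrite cards2 b1e'.
    apply: subset_leq_card; apply/subsetP => t.
    rewrite !inE => /orP [/eqP ->|/eqP ->].
      by rewrite eqxx orbT HS1.
    rewrite e'E e'e HS2 /=.
    exact: isog_trans iy (isog_trans (Hrs y e yE eE) hX).
  rewrite (_ : [set _ in A | _] = set0) ?cards0 //.
  apply/setP => a; rewrite !inE; apply/negbTE; apply/andP => [[aA ha]].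
  by apply: (negP hX); exact: isog_trans (Hrs e a eE (subsetP AE a aA)) ha.
Qed.

Theorem mainTheorem2 (n : nat) (E : graph n)
  (Hsimple : simple_graph E) (Hconn : connected E) (Hreg : regular E)
  (Hedge : E != set0) (Hrec : edge_reconstructable E)
  (Hswap : two_swappable E) (Hrs : removal_similar E)
  (r : nat) (Hern : is_ern E r) : 3 <= r.
Proof.
case: Hern => [[A [AE [cA rec]]] _].
rewrite ltnNge; apply/negP => hr.
have c2 : #|A| <= 2 by rewrite cA.
have [m [H bl]] := blocker_exists Hsimple Hreg Hedge Hswap Hrs AE c2.
exact: rec bl.
Qed.
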